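(* For all integers $n\ge 0$ and $t\ge 1$, $$\bigl(F(t-1)-2\bigr)\,c(2^t n)=c\bigl(2^t n+2^{t-1}-1\bigr).$$
   Context: For $n\ge 0$, $c(n)=\sum_{i=0}^{n}\left(\binom{n}{i}\bmod 2\right)2^{i}$, the integer whose binary digits form the $n$-th row of Pascal's triangle modulo $2$. $F(j)=2^{2^j}+1$ is the $j$-th Fermat number. *)

(* Defs.v *)
From mathcomp Require Import all_boot.
Set Implicit Arguments. Unset Strict Implicit. Unset Printing Implicit Defensive.

Definition c (n : nat) : nat := \sum_(0 <= i < n.+1) ('C(n, i) %% 2) * 2 ^ i.

Definition F (j : nat) : nat := 2 ^ (2 ^ j) + 1.

(* Main.v *)
Require Import Defs.
From mathcomp Require Import all_boot.
From mathcomp Require Import zify.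

Lemma binSS n k : 'C(n.+2, k.+2) = 'C(n, k.+2) + 'C(n, k.+1).*2 + 'C(n, k).
Proof. rewrite !binS -addnn; lia. Qed.

Lemma oddSS n k : odd 'C(n.+2, k.+2) = odd 'C(n, k.+2) (+) odd 'C(n, k).
Proof.
rewrite binSS (oddD ('C(n, k.+2) + 'C(n, k.+1).*2)) (oddD ('C(n, k.+2))).
by rewrite odd_double addbF.
Qed.

Lemma lucas_even a : forall b,
  odd 'C(2 * a, 2 * b) = odd 'C(a, b) /\ ~~ odd 'C(2 * a, (2 * b).+1).
Proof.
elim: a => [|a IH] b.
  case: b => [|b]; first by rewrite !muln0 !bin0.
  by rewrite muln0 mulnS !bin0n.
have -> : 2 * a.+1 = (2 * a).+2 by lia.
split.
  case: b => [|b]; first by rewrite !muln0 !bin0.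
  have -> : 2 * b.+1 = (2 * b).+2 by lia.
  rewrite oddSS.
  have -> : (2 * b).+2 = 2 * b.+1 by lia.
  by rewrite (IH b.+1).1 (IH b).1 (binS a b) (oddD ('C(a, b.+1))).
case: b => [|b]; first by rewrite muln0 bin1 (_ : (2 * a).+2 = 2 * a.+1) ?oddM //; lia.
have -> : (2 * b.+1).+1 = (2 * b).+1.+2 by lia.
rewrite oddSS.
have -> : (2 * b).+1.+2 = (2 * b.+1).+1 by lia.
by rewrite (negbTE (IH b.+1).2) (negbTE (IH b).2).
Qed.

Lemma lucas1 a b x y : x < 2 -> y < 2 ->
  odd 'C(2 * a + x, 2 * b + y) = odd 'C(a, b) && odd 'C(x, y).
Proof.
case: x => [|[|//]] _; case: y => [|[|//]] _; rewrite ?addn0 ?addn1.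
- by rewrite (lucas_even a b).1 andbT.
- by rewrite (negbTE (lucas_even a b).2) bin0n andbF.
- case: b => [|b]; first by rewrite muln0 !bin0.
  have -> : 2 * b.+1 = (2 * b).+1.+1 by lia.
  rewrite binS (oddD ('C(2 * a, (2 * b).+2))) (negbTE (lucas_even a b).2) addbF.
  have -> : (2 * b).+2 = 2 * b.+1 by lia.
  by rewrite (lucas_even a b.+1).1 andbT.
- by rewrite binS (oddD ('C(2 * a, (2 * b).+1))) (negbTE (lucas_even a b).2) (lucas_even a b).1 andbT.
Qed.

Lemma LA k : forall M q r, r < 2 ^ k ->
  odd 'C(2 ^ k * M, 2 ^ k * q + r) = (r == 0) && odd 'C(M, q).
Proof.
elim: k => [|k IH] M q r hr.
  rewrite expn0 in hr *; have -> : r = 0 by lia.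
  by rewrite !mul1n addn0.
have hr2 := odd_double_half r.
have -> : 2 ^ k.+1 * M = 2 * (2 ^ k * M) + 0 by rewrite expnS; lia.
have -> : 2 ^ k.+1 * q + r = 2 * (2 ^ k * q + r./2) + odd r
  by rewrite expnS -mul2n in hr2 *; lia.
rewrite lucas1 //; last by case: (odd r).
have hr' : r./2 < 2 ^ k by rewrite expnS -mul2n in hr hr2; lia.
rewrite IH //.
case ho: (odd r) hr2 => /= hr2.
  by rewrite andbF; have -> : (r == 0) = false by apply/eqP; lia.
rewrite andbT; congr (_ && _); apply/eqP/eqP; rewrite -mul2n in hr2; lia.
Qed.

Lemma LB k : forall M q r, r < 2 ^ k ->
  odd 'C(2 ^ k * M + (2 ^ k).-1, 2 ^ k * q + r) = odd 'C(M, q).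
Proof.
elim: k => [|k IH] M q r hr.
  rewrite expn0 in hr *; have -> : r = 0 by lia.
  by rewrite !mul1n !addn0.
have hr2 := odd_double_half r.
have hk : 0 < 2 ^ k by rewrite expn_gt0.
have -> : 2 ^ k.+1 * M + (2 ^ k.+1).-1 = 2 * (2 ^ k * M + (2 ^ k).-1) + 1
  by rewrite expnS; lia.
have -> : 2 ^ k.+1 * q + r = 2 * (2 ^ k * q + r./2) + odd r
  by rewrite expnS -mul2n in hr2 *; lia.
rewrite lucas1 //; last by case: (odd r).
have hr' : r./2 < 2 ^ k by rewrite expnS -mul2n in hr hr2; lia.
by rewrite IH //; case: (odd r); rewrite andbT.
Qed.

Lemma sum_split m Q (f : nat -> nat) :
  \sum_(0 <= i < m * Q) f i = \sum_(0 <= q < Q) \sum_(0 <= r < m) f (m * q + r).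
Proof.
elim: Q => [|Q IH]; first by rewrite muln0 !big_geq.
rewrite big_nat_recr //= -IH (@big_cat_nat _ _ _ (m * Q)) //=; last by rewrite leq_mul2l leqnSn orbT.
congr (_ + _); rewrite -[in LHS](add0n (m * Q)) big_addn.
have -> : m * Q.+1 - m * Q = m by rewrite mulnS; lia.
by apply: eq_bigr => i _; rewrite addnC.
Qed.

Lemma c_ext L K : L < K -> c L = \sum_(0 <= i < K) ('C(L, i) %% 2) * 2 ^ i.
Proof.
move=> hLK; rewrite /c (@big_cat_nat _ _ _ L.+1 0 K) //=.
rewrite -[LHS]addn0; congr (_ + _); symmetry.
rewrite big1_seq // => i /=; rewrite mem_index_iota => /andP[h1 _].
by rewrite bin_small.
Qed.

Lemma geom m : \sum_(0 <= r < m) 2 ^ r = 2 ^ m - 1.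
Proof.
elim: m => [|m IH]; first by rewrite big_geq.
rewrite big_nat_recr //= IH expnS; have := expn_gt0 2 m; lia.
Qed.

Theorem lemma1 (n t : nat) (ht : 1 <= t) :
  (F (t - 1) - 2) * c (2 ^ t * n) = c (2 ^ t * n + 2 ^ (t - 1) - 1).
Proof.
case: t ht => [//|k] _.
have -> : k.+1 - 1 = k by lia.
set m := 2 ^ k.
have hm : 0 < m by rewrite expn_gt0.
have -> : 2 ^ k.+1 * n = m * (2 * n) by rewrite expnS /m; lia.
set M := 2 * n.
have -> : m * M + m - 1 = m * M + m.-1 by lia.
have -> : F k - 2 = 2 ^ m - 1 by rewrite /F /m; lia.
rewrite (@c_ext (m * M) (m * M.+1)); last by rewrite mulnS; lia.
rewrite (@c_ext (m * M + m.-1) (m * M.+1)); last by rewrite mulnS; lia.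
rewrite !sum_split big_distrr /=.
apply: eq_bigr => q _.
rewrite (big_ltn hm) big1_seq ?addn0; last first.
  move=> r /=; rewrite mem_index_iota => /andP[h1 h2].
  by rewrite !modn2 LA //; have -> : (r == 0) = false by apply/eqP; lia.
rewrite !modn2 -{1}(addn0 (m * q)) LA // eqxx /=.
rewrite (@eq_big_nat _ _ _ 0 m _ (fun r => odd 'C(M, q) * 2 ^ (m * q) * 2 ^ r)); last first.
  by move=> r /andP[_ hr]; rewrite modn2 LB // expnD mulnA.
by rewrite -big_distrr /= geom mulnC.
Qed.
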